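(* For non-negative integers $n$ let $$S_n=\sum_{k=0}^{n-3}(-1)^k\binom{2k}{k}\binom{n-3}{k}\binom{k}{n-k-3}$$ (so $S_0=S_1=S_2=0$, the sum being empty). Then for every non-negative integer $n$, $$S_{3n}\equiv S_{3n+1}\equiv -S_{3n+2}\pmod 3,\qquad S_{4n+2}\equiv 0\pmod 4,$$ and for every positive integer $n$, $$S_{n+2}+12S_{n+1}+16S_n\equiv 0\pmod n.$$
   Context: Binomial coefficients $\binom{a}{b}$ are zero when $b<0$ or $b>a$. *)

(* Defs.v *)
From mathcomp Require Import all_boot all_order all_algebra.
Set Implicit Arguments. Unset Strict Implicit. Unset Printing Implicit Defensive.
Import GRing.Theory Num.Theory.
Local Open Scope ring_scope.

(* The range 0 <= k < n-2 (truncated nat subtraction) is exactly k = 0..n-3,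
   empty when n <= 2.  Inside the range n-k-3 >= 0, so nat subtraction is exact. *)
Definition S (n : nat) : int :=
  \sum_(0 <= k < n - 2)
    (-1) ^+ k * ('C(k.*2, k) * 'C(n - 3, k) * 'C(k, n - k - 3))%:Z.

(* Main.v *)
Require Import Defs.
From mathcomp Require Import all_boot all_order all_algebra.
From mathcomp Require Import ring zify.
Import GRing.Theory Num.Theory.
Local Open Scope ring_scope.
Notation P := {poly {poly int}}.
Definition Y : P := ('X)%:P.
Definition thu (p : P) : P := 'X * p^`().
Definition fy (c : {poly int}) : {poly int} := 'X * c^`().
Definition thy (p : P) : P := map_poly fy p.
Lemma fy0 : fy 0 = 0. Proof. by rewrite /fy deriv0 mulr0. Qed.
Lemma fyD a b : fy (a + b) = fy a + fy b. Proof. by rewrite /fy derivD mulrDr. Qed.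
Lemma fyN a : fy (- a) = - fy a. Proof. by rewrite /fy derivN mulrN. Qed.
Lemma fyM a b : fy (a * b) = fy a * b + a * fy b.
Proof. rewrite /fy derivM; ring. Qed.
Lemma fy_sum I r (Pr : pred I) (F : I -> {poly int}) :
  fy (\sum_(i <- r | Pr i) F i) = \sum_(i <- r | Pr i) fy (F i).
Proof. exact: (big_morph fy fyD fy0). Qed.
Lemma thuD p q : thu (p + q) = thu p + thu q. Proof. by rewrite /thu derivD mulrDr. Qed.
Lemma thuN p : thu (- p) = - thu p. Proof. by rewrite /thu derivN mulrN. Qed.
Lemma thuM p q : thu (p * q) = thu p * q + p * thu q.
Proof. rewrite /thu derivM; ring. Qed.
Lemma thyD p q : thy (p + q) = thy p + thy q.
Proof. by apply/polyP=> i; rewrite coefD !coef_map_id0 ?fy0 // coefD fyD. Qed.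
Lemma thyN p : thy (- p) = - thy p.
Proof. by apply/polyP=> i; rewrite coefN !coef_map_id0 ?fy0 // coefN fyN. Qed.
Lemma thyM p q : thy (p * q) = thy p * q + p * thy q.
Proof.
apply/polyP=> i; rewrite coefD !coef_map_id0 ?fy0 // !coefM fy_sum -big_split /=.
apply: eq_bigr => j _; rewrite fyM !coef_map_id0 ?fy0 //.
Qed.
Definition cf (p : P) i j : int := (p`_i)`_j.
Lemma cf_thu p n : cf (thu p) n n = cf p n n *+ n.
Proof.
rewrite /cf /thu coefXM; case: n => [|n] //=; first by rewrite coef0 mulr0n.
by rewrite coef_deriv coefMn.
Qed.
Lemma cf_thy p n : cf (thy p) n n = cf p n n *+ n.
Proof.
rewrite /cf /thy coef_map_id0 ?fy0 // /fy coefXM; case: n => [|n] //=.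
by rewrite coef_deriv.
Qed.
Lemma cfD p q i j : cf (p + q) i j = cf p i j + cf q i j.
Proof. by rewrite /cf !coefD. Qed.
Lemma cfN p i j : cf (- p) i j = - cf p i j.
Proof. by rewrite /cf !coefN. Qed.
Lemma cfMn p i j k : cf (p *+ k) i j = cf p i j *+ k.
Proof. by rewrite /cf !coefMn. Qed.
Lemma cfU p i j : cf ('X * (('X)%:P * p)) i.+1 j.+1 = cf p i j.
Proof. by rewrite /cf coefXM /= coefCM coefXM. Qed.

Lemma derX (D : P -> P) (DM : forall p q, D (p * q) = D p * q + p * D q) (p : P) k :
  D (p ^+ k.+1) = p ^+ k * D p *+ k.+1.
Proof.
elim: k => [|k IH]; first by rewrite expr1 expr0 mul1r.
by rewrite (exprS p k.+1) DM IH mulrnAr mulrA -exprS (mulrC (D p)) [in RHS]mulrS.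
Qed.
Lemma thuX p k : thu (p ^+ k.+1) = p ^+ k * thu p *+ k.+1. Proof. by apply: derX => ??; apply: thuM. Qed.
Lemma thyX p k : thy (p ^+ k.+1) = p ^+ k * thy p *+ k.+1. Proof. by apply: derX => ??; apply: thyM. Qed.
Lemma thu_X : thu 'X = 'X. Proof. by rewrite /thu derivX mulr1. Qed.
Lemma thu_Y : thu Y = 0. Proof. by rewrite /thu /Y derivC mulr0. Qed.
Lemma thu_nat n : thu n%:R = 0. Proof. by rewrite /thu -polyC_natr derivC mulr0. Qed.
Lemma thy_X : thy 'X = 0.
Proof.
apply/polyP=> i; rewrite coef_map_id0 ?fy0 // coefX coef0 /fy.
by case: (i == 1)%N; rewrite ?derivC ?mulr0 // -polyC1 derivC mulr0.
Qed.
Lemma thy_Y : thy Y = Y.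
Proof.
apply/polyP=> i; rewrite coef_map_id0 ?fy0 // /Y !coefC /fy.
by case: (i == 0)%N; rewrite ?derivX ?mulr1 // deriv0 mulr0.
Qed.
Lemma thy_nat n : thy n%:R = 0.
Proof.
apply/polyP=> i; rewrite coef_map_id0 ?fy0 // -polyC_natr coefC coef0 /fy.
by case: (i == 0)%N; rewrite ?deriv0 ?mulr0 // -polyC_natr derivC mulr0.
Qed.
Definition Psi : P := Y - 'X * (1 + 'X) * (1 + Y) ^+ 2.
Definition T m := cf (Psi ^+ m) m m.

Lemma coef1X (R : nzRingType) n k : ((1 + 'X : {poly R}) ^+ n)`_k = 'C(n, k)%:R.
Proof.
elim: n k => [|n IH] k; first by rewrite expr0 coefC bin0n; case: k.
rewrite exprS mulrDl mul1r coefD coefXM IH; case: k => [|k] /=.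
  by rewrite addr0 !bin0.
by rewrite IH binS natrD addrC.
Qed.

Lemma cf_sum I (r : seq I) (Pr : pred I) (F : I -> P) i j :
  cf (\sum_(k <- r | Pr k) F k) i j = \sum_(k <- r | Pr k) cf (F k) i j.
Proof. by rewrite /cf !coef_sum. Qed.

Lemma term_eq m i :
  Y ^+ (m - i) * (- ('X * (1 + 'X) * (1 + Y) ^+ 2)) ^+ i =
  ('X ^+ i * (1 + 'X) ^+ i) * (('X ^+ (m - i) * (1 + 'X) ^+ (i.*2)) * ((-1) ^+ i)%:P)%:P.
Proof.
rewrite !polyCM !polyC_exp polyCD polyCN polyC1 -/Y.
rewrite exprNn !exprMn -exprD addnn ?polyCN ?polyC1 ?polyCN ?polyC1.
set a := Y ^+ _; set b := ('X : P) ^+ i; set c := (1 + ('X : P)) ^+ i.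
set d := (1 + Y) ^+ _; set e := (-1 : P) ^+ i.
ring.
Qed.

Lemma T_sum m : T m =
  \sum_(i < m.+1) ((-1) ^+ i * ('C(i.*2, i) * 'C(m, i) * 'C(i, m - i))%:Z).
Proof.
rewrite /T /Psi exprDn cf_sum; apply: eq_bigr => -[i /= lim] _.
rewrite /cf coefMn term_eq coefMC coefXnM ltnNge -ltnS lim /= coef1X.
rewrite coefMn mulr_natl coefMn coefMC coefXnM.
rewrite ltnNge leq_subr /= subKn; last by rewrite -ltnS.
rewrite coef1X -(mulr_natr _ 'C(m, i)) -(mulr_natr _ 'C(i, m - i)) !PoszM !natz; ring.
Qed.
Definition aC : P := 0 + ('X ^+ 1 * Y ^+ 2) + 3 * ('X ^+ 2 * Y ^+ 2) - 6 * ('X ^+ 2 * Y ^+ 3) + 2 * ('X ^+ 3 * Y ^+ 1) + 2 * ('X ^+ 3 * Y ^+ 2) - 6 * ('X ^+ 3 * Y ^+ 3).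
Definition bC : P := 0 + 4 * ('X ^+ 1 * Y ^+ 2) - 5 * ('X ^+ 2 * Y ^+ 1) - 4 * ('X ^+ 2 * Y ^+ 2) + ('X ^+ 2 * Y ^+ 3) + 2 * ('X ^+ 3) + 9 * ('X ^+ 3 * Y ^+ 1) + 14 * ('X ^+ 3 * Y ^+ 2) + 7 * ('X ^+ 3 * Y ^+ 3).
Definition aK : P := 0 + 8 * ('X ^+ 2 * Y ^+ 2) - 3 * ('X ^+ 2 * Y ^+ 3) + ('X ^+ 2 * Y ^+ 4) + ('X ^+ 3 * Y ^+ 1) + 6 * ('X ^+ 3 * Y ^+ 2) - 11 * ('X ^+ 3 * Y ^+ 3) - 4 * ('X ^+ 3 * Y ^+ 4) - ('X ^+ 3 * Y ^+ 5) - 5 * ('X ^+ 4 * Y ^+ 2) - 12 * ('X ^+ 4 * Y ^+ 3) - 9 * ('X ^+ 4 * Y ^+ 4) - 2 * ('X ^+ 4 * Y ^+ 5) - 2 * ('X ^+ 5 * Y ^+ 2) - 5 * ('X ^+ 5 * Y ^+ 3) - 4 * ('X ^+ 5 * Y ^+ 4) - ('X ^+ 5 * Y ^+ 5).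
Definition bK : P := 0 + ('X ^+ 1 * Y ^+ 2) - 2 * ('X ^+ 2 * Y ^+ 1) + 3 * ('X ^+ 2 * Y ^+ 2) + 4 * ('X ^+ 2 * Y ^+ 3) - ('X ^+ 2 * Y ^+ 4) + ('X ^+ 3) + 7 * ('X ^+ 3 * Y ^+ 1) + 18 * ('X ^+ 3 * Y ^+ 2) + 13 * ('X ^+ 3 * Y ^+ 3) + 2 * ('X ^+ 3 * Y ^+ 4) + ('X ^+ 3 * Y ^+ 5) - ('X ^+ 4) - 4 * ('X ^+ 4 * Y ^+ 1) - 4 * ('X ^+ 4 * Y ^+ 2) + 2 * ('X ^+ 4 * Y ^+ 3) + 5 * ('X ^+ 4 * Y ^+ 4) + 2 * ('X ^+ 4 * Y ^+ 5) - ('X ^+ 5) - 4 * ('X ^+ 5 * Y ^+ 1) - 5 * ('X ^+ 5 * Y ^+ 2) - ('X ^+ 5 * Y ^+ 3) + 2 * ('X ^+ 5 * Y ^+ 4) + ('X ^+ 5 * Y ^+ 5).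

Lemma thu0 : thu 0 = 0. Proof. exact: (thu_nat 0). Qed.
Lemma thu1 : thu 1 = 0. Proof. exact: (thu_nat 1). Qed.
Lemma thy0 : thy 0 = 0. Proof. exact: (thy_nat 0). Qed.
Lemma thy1 : thy 1 = 0. Proof. exact: (thy_nat 1). Qed.
Ltac thcomp := rewrite ?(thuD, thuN, thuM, thuX, thu_X, thu_Y, thu_nat, thyD, thyN, thyM, thyX, thy_X, thy_Y, thy_nat, thu0, thu1, thy0, thy1).
Lemma certC : Psi * (thu aC + thy bC) - (thu Psi * aC + thy Psi * bC) *+ 2 =
  'X * Y * Psi ^+ 2 + ('X * Y) ^+ 2 * Psi * 12 + ('X * Y) ^+ 3 * 16.
Proof.
rewrite /aC /bC /Psi. thcomp. ring.
Qed.
Lemma cert_gen (a b tg : P) m :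
  Psi * (thu a + thy b) - (thu Psi * a + thy Psi * b) *+ 2 = tg ->
  cf (Psi ^+ m * tg) m.+3 m.+3 =
  (cf (Psi ^+ m.+1 * a) m.+3 m.+3 + cf (Psi ^+ m.+1 * b) m.+3 m.+3
    - cf (Psi ^+ m * (thu Psi * a + thy Psi * b)) m.+3 m.+3) *+ m.+3.
Proof.
move=> <-.
have E : Psi ^+ m * (Psi * (thu a + thy b) - (thu Psi * a + thy Psi * b) *+ 2) =
  thu (Psi ^+ m.+1 * a) + thy (Psi ^+ m.+1 * b)
   - (Psi ^+ m * (thu Psi * a + thy Psi * b)) *+ m.+3.
  rewrite thuM thyM thuX thyX (exprS Psi m).
  set q := Psi ^+ m.
  rewrite -(mulr_natr (q * thu Psi) m.+1) -(mulr_natr (q * thy Psi) m.+1).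
  rewrite -(mulr_natr _ m.+3) -(mulr_natr _ 2).
  ring.
rewrite E cfD cfN cfMn cfD cf_thu cf_thy.
by rewrite mulrnBl mulrnDl.
Qed.
Lemma certK : Psi * (thu aK + thy bK) - (thu Psi * aK + thy Psi * bK) *+ 2 =
  (('X * Y) ^+ 2 * Psi + ('X * Y) ^+ 3 * 2) * 16.
Proof.
rewrite /aK /bK /Psi. thcomp. ring.
Qed.

Lemma dvd_mn (x : int) n : (n%:Z %| x *+ n)%Z.
Proof. by rewrite -mulr_natr natz dvdz_mull. Qed.

Lemma C_dvd m : ((m.+3)%:Z %| T m.+2 + 12 * T m.+1 + 16 * T m)%Z.
Proof.
have -> : T m.+2 + 12 * T m.+1 + 16 * T m =
   cf (Psi ^+ m * ('X * Y * Psi ^+ 2 + ('X * Y) ^+ 2 * Psi * 12 + ('X * Y) ^+ 3 * 16)) m.+3 m.+3.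
  have -> : Psi ^+ m * ('X * Y * Psi ^+ 2 + ('X * Y) ^+ 2 * Psi * 12 + ('X * Y) ^+ 3 * 16) =
    'X * (Y * Psi ^+ m.+2) + ('X * (Y * ('X * (Y * Psi ^+ m.+1)))) *+ 12
     + ('X * (Y * ('X * (Y * ('X * (Y * Psi ^+ m)))))) *+ 16.
    rewrite !exprS; set q := Psi ^+ m.
    rewrite -(mulr_natr _ 12) -(mulr_natr _ 16); ring.
  by rewrite cfD cfD cfMn cfMn !cfU !mulr_natl.
rewrite (cert_gen _ _ _ m certC); exact: dvd_mn.
Qed.

Lemma K_dvd m : ((m.+3)%:Z %| (T m.+1 + 2 * T m) * 16)%Z.
Proof.
have -> : (T m.+1 + 2 * T m) * 16 =
   cf (Psi ^+ m * ((('X * Y) ^+ 2 * Psi + ('X * Y) ^+ 3 * 2) * 16)) m.+3 m.+3.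
  have -> : Psi ^+ m * ((('X * Y) ^+ 2 * Psi + ('X * Y) ^+ 3 * 2) * 16) =
    (('X * (Y * ('X * (Y * Psi ^+ m.+1))))
     + ('X * (Y * ('X * (Y * ('X * (Y * Psi ^+ m)))))) *+ 2) *+ 16.
    rewrite !exprS; set q := Psi ^+ m.
    rewrite -(mulr_natr _ 2) -(mulr_natr _ 16); ring.
  by rewrite cfMn cfD cfMn !cfU !mulr_natl mulr_natr.
rewrite (cert_gen _ _ _ m certK); exact: dvd_mn.
Qed.

Lemma S_T m : S m.+3 = T m.
Proof.
rewrite /S T_sum.
have -> : (m.+3 - 2 = m.+1)%N by lia.
rewrite big_mkord; apply: eq_bigr => i _.
have -> : (m.+3 - 3 = m)%N by lia.
by rewrite subnAC (_ : (m.+3 - 3 = m)%N) //; lia.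
Qed.

Lemma S_small n : (n <= 2)%N -> S n = 0.
Proof. by move=> h; rewrite /S big_geq // leqn0 subn_eq0. Qed.

Lemma T0 : T 0 = 1.
Proof. by rewrite T_sum big_ord_recr big_ord0 /=. Qed.

Lemma T1 : T 1 = -2.
Proof. by rewrite T_sum !big_ord_recr big_ord0 /=. Qed.

Lemma dvd3 k : (3 %| ((3 * k)%N.+3)%:Z)%Z.
Proof. by rewrite dvdzE /= (_ : ((3 * k).+3 = 3 * k.+1)%N) ?dvdn_mulr //; lia. Qed.

Lemma dvd4 k : (4 %| ((4 * k + 1)%N.+3)%:Z)%Z.
Proof. by rewrite dvdzE /= (_ : ((4 * k + 1).+3 = 4 * k.+1)%N) ?dvdn_mulr //; lia. Qed.

Theorem lemma4 :
  (forall n : nat,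
      (S (3 * n) = S (3 * n + 1) %[mod 3])%Z /\
      (S (3 * n + 1) = - S (3 * n + 2) %[mod 3])%Z) /\
  (forall n : nat, (S (4 * n + 2) = 0 %[mod 4])%Z) /\
  (forall n : nat, (0 < n)%N ->
      (S (n + 2) + 12 * S (n + 1) + 16 * S n = 0 %[mod n%:Z])%Z).
Proof.
split; [|split].
- case=> [|k].
    by rewrite !S_small.
  rewrite (_ : (3 * k.+1 = (3 * k).+3)%N); last by lia.
  rewrite (_ : ((3 * k).+3 + 1 = (3 * k).+1.+3)%N); last by lia.
  rewrite (_ : ((3 * k).+3 + 2 = (3 * k).+2.+3)%N); last by lia.
  rewrite !S_T.
  have hC := dvdz_trans (dvd3 k) (C_dvd (3 * k)).
  have hK := dvdz_trans (dvd3 k) (K_dvd (3 * k)).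
  set t0 := T (3 * k) in hC hK *; set t1 := T (3 * k).+1 in hC hK *.
  set t2 := T (3 * k).+2 in hC hK *.
  split; apply/eqP; rewrite eqz_mod_dvd.
    have -> : t0 - t1 = - ((t1 + 2 * t0) * 16) + (5 * t1 + 11 * t0) * 3 by ring.
    by rewrite rpredD ?rpredN //; apply: dvdz_mull; apply: dvdzz.
  have -> : t1 - - t2 = (t2 + 12 * t1 + 16 * t0) + (t1 + 2 * t0) * 16
                         - (9 * t1 + 16 * t0) * 3 by ring.
  apply: rpredB; first by apply: rpredD.
  by apply: dvdz_mull; apply: dvdzz.
- case=> [|k].
    by rewrite S_small.
  rewrite (_ : (4 * k.+1 + 2 = (4 * k + 1).+2.+3)%N); last by lia.
  rewrite S_T; apply/eqP; rewrite eqz_mod_dvd subr0.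
  have hC := dvdz_trans (dvd4 k) (C_dvd (4 * k + 1)).
  set t0 := T (4 * k + 1) in hC *; set t1 := T (4 * k + 1).+1 in hC *.
  set t2 := T (4 * k + 1).+2 in hC *.
  have -> : t2 = (t2 + 12 * t1 + 16 * t0) - (3 * t1 + 4 * t0) * 4 by ring.
  by rewrite rpredB //; apply: dvdz_mull; apply: dvdzz.
- case=> [|[|[|m]]] // _.
  + by apply/eqP; rewrite eqz_mod_dvd dvdzE /= dvd1n.
  + rewrite (_ : (2 + 2 = 1 .+3)%N) // (_ : (2 + 1 = 0 .+3)%N) // !S_T S_small //.
    by rewrite T0 T1.
  rewrite (_ : (m.+3 + 2 = m.+2.+3)%N); last by lia.
  rewrite (_ : (m.+3 + 1 = m.+1.+3)%N); last by lia.
  by rewrite !S_T; apply/eqP; rewrite eqz_mod_dvd subr0 C_dvd.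
Qed.
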